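(* Let $P$ be a polyomino with consistent parity. Then $B(P,1)$ and $B(P,-1)$ both have consistent parity.
   Context: A cell is a unit square $[i,i+1]\times[j,j+1]$ with $i,j\in\mathbb{Z}$. A polyomino is a finite union of cells. A polyomino $P$ has consistent parity if all first coordinates of its corners have the same parity and all second coordinates of its corners have the same parity. Equivalently, there is an open $2\times 2$ square $S$ such that for all integers $i,j$, the translate $S'=S+(2i,2j)$ satisfies either $S'\subseteq P$ or $S'\cap P=\emptyset$. Distances are measured in the $L_\infty$-norm: $\mathrm{dist}(a,b)=\|a-b\|_\infty$, and $\mathrm{dist}(A,B)=\inf_{a\in A,b\in B}\mathrm{dist}(a,b)$. For $A\subseteq\mathbb{R}^2$ and $r\ge 0$, define $B(A,r)=\{x\in\mathbb{R}^2:\mathrm{dist}(x,A)\le r\}$. For $r<0$, define $B(A,r)=B(A^c,-r)^c$. *)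

(* Defs.v *)
From Stdlib Require Import Reals Lra ZArith List.
Open Scope R_scope.

Definition pt := (R * R)%type.
Definition region := pt -> Prop.

Definition cell (i j : Z) : region :=
  fun x => IZR i <= fst x <= IZR i + 1 /\ IZR j <= snd x <= IZR j + 1.

Definition is_polyomino (P : region) : Prop :=
  exists cs : list (Z * Z),
    forall x, P x <-> exists c, In c cs /\ cell (fst c) (snd c) x.

Definition dinf (a b : pt) : R :=
  Rmax (Rabs (fst a - fst b)) (Rabs (snd a - snd b)).

(* dist(x, A) <= r, i.e. inf_{a in A} dinf x a <= r (false when A is empty,
   since then the infimum is +infinity). *)
Definition dist_le (x : pt) (A : region) (r : R) : Prop :=
  forall e, 0 < e -> exists a, A a /\ dinf x a < r + e.

Definition compl (A : region) : region := fun x => ~ A x.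

Definition Bnb (A : region) (r : R) : region :=
  fun x => if Rle_dec 0 r then dist_le x A r else ~ dist_le x (compl A) (- r).

Definition open_sq2 (a b : R) : region :=
  fun x => a < fst x < a + 2 /\ b < snd x < b + 2.

Definition consistent_parity (A : region) : Prop :=
  exists a b : R, forall i j : Z,
    let S' := open_sq2 (a + 2 * IZR i) (b + 2 * IZR j) in
    (forall x, S' x -> A x) \/ (forall x, S' x -> ~ A x).

(* Main.v *)
Require Import Defs.
From Stdlib Require Import Reals.
From Stdlib Require Import Lra List Classical.
Open Scope R_scope.

Lemma abs_lt u r : Rabs u < r <-> -r < u < r.
Proof. split. intro H; destruct (Rabs_def2 _ _ H); lra. intros [? ?]; apply Rabs_def1; lra. Qed.

Lemma abs_le u r : Rabs u <= r -> -r <= u <= r.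
Proof. intro H. destruct (Rcase_abs u). rewrite Rabs_left in H; lra. rewrite Rabs_right in H; lra. Qed.

Lemma dinf_lt x y r : dinf x y < r <-> (Rabs (fst x - fst y) < r /\ Rabs (snd x - snd y) < r).
Proof.
  unfold dinf. split.
  - intro H; split; eapply Rle_lt_trans; [apply Rmax_l | exact H | apply Rmax_r | exact H].
  - intros [H1 H2]; apply Rmax_lub_lt; auto.
Qed.

Lemma between (l1 l2 h1 h2 g : R) : l1 < h1 -> l1 < h2 -> l2 < h1 -> l2 < h2 ->
  exists y, l1 < y /\ l2 < y /\ y < h1 /\ y < h2 /\ y <> g.
Proof.
  intros. pose (lo := Rmax l1 l2). pose (hi := Rmin h1 h2).
  assert (lo < hi) by (unfold lo, hi, Rmax, Rmin; destruct Rle_dec; destruct Rle_dec; lra).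
  assert (l1 <= lo /\ l2 <= lo) by (split; [apply Rmax_l|apply Rmax_r]).
  assert (hi <= h1 /\ hi <= h2) by (split; [apply Rmin_l|apply Rmin_r]).
  destruct (Req_dec ((lo+hi)/2) g).
  - exists ((3*lo+hi)/4); repeat split; try lra; intro; lra.
  - exists ((lo+hi)/2); repeat split; try lra; intro; lra.
Qed.

Lemma side y g : y <> g -> (g - 2 < y -> y < g + 2 -> (g-2<y<g \/ g<y<g+2)).
Proof.
  intros Hn H1 H2. destruct (Rtotal_order y g) as [H|[H|H]];
  [left; lra | contradiction | right; lra].
Qed.

Lemma avoid1 (c p g : R) : c <= p <= c+1 -> Rabs (p - g) < 2 ->
  exists y, c<y<c+1 /\ (g-2<y<g \/ g<y<g+2).
Proof.
  intros Hc Hp. apply abs_lt in Hp.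
  destruct (between c (g-2) (c+1) (g+2) g) as [y [? [? [? [? ?]]]]]; try lra.
  exists y; split; [lra|]. apply side; lra || assumption.
Qed.

Lemma avoid2 (q g eps : R) : 0 < eps -> Rabs (q - g) < 2 ->
  exists y, Rabs (y - q) < eps /\ (g-2<y<g \/ g<y<g+2).
Proof.
  intros He Hp. apply abs_lt in Hp.
  destruct (between (q-eps) (g-2) (q+eps) (g+2) g) as [y [? [? [? [? ?]]]]]; try lra.
  exists y; split; [apply abs_lt; lra|]. apply side; lra || assumption.
Qed.

Lemma clamp1 (x g s e : R) : Rabs (x-g) < 1 -> 0<e -> (s = g - 2 \/ s = g) ->
  exists y, s<y<s+2 /\ Rabs (x-y) < 1+e.
Proof.
  intros Hx He Hs. apply abs_lt in Hx.
  pose (t := Rmin e 1 / 2).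
  assert (Rmin e 1 <= e) by apply Rmin_l.
  assert (Rmin e 1 <= 1) by apply Rmin_r.
  assert (0 < Rmin e 1) by (apply Rmin_glb_lt; lra).
  destruct Hs as [-> | ->].
  - exists (g - t); unfold t; split; [lra | apply abs_lt; lra].
  - exists (g + t); unfold t; split; [lra | apply abs_lt; lra].
Qed.

Lemma cell_closed i j x : ~ cell i j x ->
  exists eps, 0<eps /\ forall y, dinf x y < eps -> ~ cell i j y.
Proof.
  unfold cell. intro H.
  destruct (Rlt_le_dec (fst x) (IZR i)).
  { exists (IZR i - fst x); split; [lra|]. intros y Hy [[? ?] ?].
    apply dinf_lt in Hy; destruct Hy as [G1 _]; apply abs_lt in G1; lra. }
  destruct (Rlt_le_dec (IZR i + 1) (fst x)).
  { exists (fst x - IZR i - 1); split; [lra|]. intros y Hy [[? ?] ?].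
    apply dinf_lt in Hy; destruct Hy as [G1 _]; apply abs_lt in G1; lra. }
  destruct (Rlt_le_dec (snd x) (IZR j)).
  { exists (IZR j - snd x); split; [lra|]. intros y Hy [? [? ?]].
    apply dinf_lt in Hy; destruct Hy as [_ G1]; apply abs_lt in G1; lra. }
  destruct (Rlt_le_dec (IZR j + 1) (snd x)).
  { exists (snd x - IZR j - 1); split; [lra|]. intros y Hy [? [? ?]].
    apply dinf_lt in Hy; destruct Hy as [_ G1]; apply abs_lt in G1; lra. }
  exfalso; apply H; repeat split; lra.
Qed.

Lemma union_closed cs x : ~ (exists c, In c cs /\ cell (fst c) (snd c) x) ->
  exists eps, 0<eps /\ forall y, dinf x y < eps ->
    ~ (exists c, In c cs /\ cell (fst c) (snd c) y).
Proof.
  induction cs as [|c cs IH]; intro H.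
  - exists 1; split; [lra|]. intros y _ [c [[] _]].
  - destruct (cell_closed (fst c) (snd c) x) as [e1 [He1 H1]].
    { intro Hc; apply H; exists c; split; [left; reflexivity| exact Hc]. }
    destruct IH as [e2 [He2 H2]].
    { intros [c' [Hin Hc]]; apply H; exists c'; split; [right; exact Hin| exact Hc]. }
    exists (Rmin e1 e2); split. { apply Rmin_glb_lt; lra. }
    intros y Hy [c' [[<- | Hin] Hc]].
    + apply (H1 y). eapply Rlt_le_trans; [exact Hy | apply Rmin_l]. exact Hc.
    + apply (H2 y). eapply Rlt_le_trans; [exact Hy| apply Rmin_r].
      exists c'; split; assumption.
Qed.

Theorem lemma3 (P : region) :
  is_polyomino P -> consistent_parity P ->
  consistent_parity (Bnb P 1) /\ consistent_parity (Bnb P (-1)).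
Proof.
  intros [cs Hcs] [a [b HP]].
  pose (A := fun i j : Z => forall x, open_sq2 (a + 2*IZR i) (b + 2*IZR j) x -> P x).
  assert (HPd : forall i j, A i j \/
     (forall x, open_sq2 (a + 2*IZR i) (b + 2*IZR j) x -> ~ P x))
    by (intros i j; exact (HP i j)).
  pose (adj := fun k i : Z => i = (k-1)%Z \/ i = k).
  assert (Hadj : forall (a0:R) k i, adj k i ->
     a0 + 2*IZR i = a0 + 2*IZR k - 2 \/ a0 + 2*IZR i = a0 + 2*IZR k).
  { intros a0 k i [-> | ->]; [left; rewrite minus_IZR; lra | right; reflexivity]. }
  assert (Hsq : forall k l y,
    (a+2*IZR k-2 < fst y < a+2*IZR k \/ a+2*IZR k < fst y < a+2*IZR k+2) ->
    (b+2*IZR l-2 < snd y < b+2*IZR l \/ b+2*IZR l < snd y < b+2*IZR l+2) ->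
    exists i j, adj k i /\ adj l j /\ open_sq2 (a+2*IZR i) (b+2*IZR j) y).
  { intros k l y H1 H2.
    destruct H1 as [H1|H1]; [exists (k-1)%Z | exists k];
    (destruct H2 as [H2|H2]; [exists (l-1)%Z | exists l]);
    unfold adj, open_sq2; rewrite ?minus_IZR; repeat split;
    (try (left; reflexivity)); (try (right; reflexivity)); lra. }
  assert (HnearP : forall k l p, P p -> Rabs (fst p - (a+2*IZR k)) < 2 ->
     Rabs (snd p - (b+2*IZR l)) < 2 -> exists i j, adj k i /\ adj l j /\ A i j).
  { intros k l p Hp H1 H2. destruct (proj1 (Hcs p) Hp) as [c [Hin [Hc1 Hc2]]].
    destruct (avoid1 _ _ _ Hc1 H1) as [y1 [Hy1 Hy1']].
    destruct (avoid1 _ _ _ Hc2 H2) as [y2 [Hy2 Hy2']].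
    destruct (Hsq k l (y1,y2) Hy1' Hy2') as [i [j [Hi [Hj Hs]]]].
    exists i, j; split; [exact Hi|split; [exact Hj|]].
    destruct (HPd i j) as [HA|HD]; [exact HA|]. exfalso.
    apply (HD (y1,y2) Hs). apply Hcs. exists c; split; [exact Hin|].
    unfold cell; simpl; repeat split; lra. }
  assert (HnotP : forall k l q, ~P q -> Rabs (fst q - (a+2*IZR k)) < 2 ->
     Rabs (snd q - (b+2*IZR l)) < 2 -> exists i j, adj k i /\ adj l j /\ ~A i j).
  { intros k l q Hq H1 H2.
    assert (Hu: ~ exists c, In c cs /\ cell (fst c) (snd c) q)
      by (intro Hc; apply Hq; apply Hcs; exact Hc).
    destruct (union_closed cs q Hu) as [e [He Hball]].
    destruct (avoid2 (fst q) (a+2*IZR k) e He H1) as [y1 [Hy1 Hy1']].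
    destruct (avoid2 (snd q) (b+2*IZR l) e He H2) as [y2 [Hy2 Hy2']].
    destruct (Hsq k l (y1,y2) Hy1' Hy2') as [i [j [Hi [Hj Hs]]]].
    exists i, j; split; [exact Hi|split; [exact Hj|]]. intro HA.
    apply (Hball (y1,y2)).
    - apply dinf_lt; simpl; split; rewrite Rabs_minus_sym; assumption.
    - apply Hcs. apply HA. exact Hs. }
  assert (Hcl : forall k l i j x e, adj k i -> adj l j ->
     Rabs (fst x - (a+2*IZR k)) < 1 -> Rabs (snd x - (b + 2*IZR l)) < 1 -> 0 < e ->
     exists y, open_sq2 (a+2*IZR i) (b+2*IZR j) y /\ dinf x y < 1 + e).
  { intros k l i j x e Hi Hj H1 H2 He.
    destruct (clamp1 (fst x) (a+2*IZR k) (a+2*IZR i) e H1 He (Hadj a k i Hi))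
      as [y1 [Hy1 Hy1']].
    destruct (clamp1 (snd x) (b+2*IZR l) (b+2*IZR j) e H2 He (Hadj b l j Hj))
      as [y2 [Hy2 Hy2']].
    exists (y1,y2). split.
    - unfold open_sq2; simpl; split; assumption.
    - apply dinf_lt; simpl; split; assumption. }
  assert (Hin : forall k l x, open_sq2 (a - 1 + 2*IZR k) (b - 1 + 2*IZR l) x ->
     Rabs (fst x - (a+2*IZR k)) < 1 /\ Rabs (snd x - (b+2*IZR l)) < 1).
  { intros k l x [H1 H2]; split; apply abs_lt; lra. }
  split.
  - exists (a-1), (b-1). intros k l. cbv zeta.
    destruct (classic (exists i j, adj k i /\ adj l j /\ A i j))
      as [[i [j [Hi [Hj HA]]]] | Hno].
    + left. intros x Hx. destruct (Hin k l x Hx) as [H1 H2]. unfold Bnb.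
      destruct (Rle_dec 0 1) as [_|n]; [|lra]. intros e He.
      destruct (Hcl k l i j x e Hi Hj H1 H2 He) as [y [Hy Hd]].
      exists y; split; [apply HA; exact Hy | exact Hd].
    + right. intros x Hx HB. destruct (Hin k l x Hx) as [H1 H2]. unfold Bnb in HB.
      destruct (Rle_dec 0 1) as [_|n]; [|lra].
      pose (d := Rmax (Rabs (fst x - (a+2*IZR k))) (Rabs (snd x - (b+2*IZR l)))).
      assert (Hd1 : Rabs (fst x - (a+2*IZR k)) <= d) by apply Rmax_l.
      assert (Hd2 : Rabs (snd x - (b+2*IZR l)) <= d) by apply Rmax_r.
      assert (Hd : d < 1) by (apply Rmax_lub_lt; assumption).
      destruct (HB (1-d)) as [p [Hp Hxp]]; [lra|].
      apply dinf_lt in Hxp as [Hx1 Hx2]. apply abs_lt in Hx1. apply abs_lt in Hx2.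
      apply abs_le in Hd1. apply abs_le in Hd2.
      apply Hno. apply (HnearP k l p Hp); apply abs_lt; lra.
  - exists (a-1), (b-1). intros k l. cbv zeta.
    destruct (classic (exists i j, adj k i /\ adj l j /\ ~ A i j))
      as [[i [j [Hi [Hj HA]]]] | Hno].
    + right. destruct (HPd i j) as [HA'|HD]; [contradiction|].
      intros x Hx HB. destruct (Hin k l x Hx) as [H1 H2]. unfold Bnb in HB.
      destruct (Rle_dec 0 (-1)) as [r|_]; [lra|]. apply HB. intros e He.
      destruct (Hcl k l i j x e Hi Hj H1 H2 He) as [y [Hy Hd]].
      exists y; split; [unfold compl; apply HD; exact Hy | lra].
    + left. intros x Hx. destruct (Hin k l x Hx) as [H1 H2]. unfold Bnb.
      destruct (Rle_dec 0 (-1)) as [r|_]; [lra|]. intro HB.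
      pose (d := Rmax (Rabs (fst x - (a+2*IZR k))) (Rabs (snd x - (b+2*IZR l)))).
      assert (Hd1 : Rabs (fst x - (a+2*IZR k)) <= d) by apply Rmax_l.
      assert (Hd2 : Rabs (snd x - (b+2*IZR l)) <= d) by apply Rmax_r.
      assert (Hd : d < 1) by (apply Rmax_lub_lt; assumption).
      destruct (HB (1-d)) as [q [Hq Hxq]]; [lra|].
      apply dinf_lt in Hxq as [Hx1 Hx2]. apply abs_lt in Hx1. apply abs_lt in Hx2.
      apply abs_le in Hd1. apply abs_le in Hd2.
      apply Hno. apply (HnotP k l q Hq); apply abs_lt; lra.
Qed.
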